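(* Let $\mathcal X=\mathcal X_1\times\cdots\times\mathcal X_n$ with $\mathcal X_i\subseteq\mathbb R^{d_i}$, and let $f_1,\dots,f_m:\mathcal X\to\mathbb R$ be BDC functions (with respect to this block structure). Then the following functions are also BDC: (i) $\sum_{r=1}^m\alpha_r f_r$ for any $\alpha_1,\dots,\alpha_m\in\mathbb R$; (ii) $\max_{r=1,\dots,m} f_r$ (pointwise); (iii) $\min_{r=1,\dots,m} f_r$ (pointwise).
   Context: Block notation: for $\bm\theta\in\mathcal X$, $\theta_i\in\mathcal X_i$ denotes its $i$th block and $\bar{\bm\theta}_i$ denotes the vector obtained from $\bm\theta$ by replacing the $i$th block by $0$; $\bar{\mathcal X}_i=\mathcal X_1\times\cdots\times\{0\}^{d_i}\times\cdots\times\mathcal X_n$. A function $f:\mathcal X\to\mathbb R$ is called BDC (multi-block difference-of-convex) if for every $i\in\{1,\dots,n\}$ there exist functions $g_i,h_i:\mathcal X_i\times\bar{\mathcal X}_i\to\mathbb R$ such that $f(\bm\theta)=g_i(\theta_i;\bar{\bm\theta}_i)-h_i(\theta_i;\bar{\bm\theta}_i)$ for all $\bm\theta\in\mathcal X$, and for every fixed $\bar{\bm\theta}_i$ the functions $g_i(\cdot;\bar{\bm\theta}_i)$ and $h_i(\cdot;\bar{\bm\theta}_i)$ are convex in $\theta_i$. *)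

(* Defs.v *)
From mathcomp Require Import all_boot all_order all_algebra.
From mathcomp Require Import reals.
Set Implicit Arguments. Unset Strict Implicit. Unset Printing Implicit Defensive.
Import Order.TTheory GRing.Theory Num.Theory.
Local Open Scope ring_scope.

Definition point (R : realType) (n : nat) (d : 'I_n -> nat) :=
  forall i : 'I_n, 'rV[R]_(d i).

Definition inX (R : realType) n (d : 'I_n -> nat)
  (X : forall i : 'I_n, 'rV[R]_(d i) -> Prop) (th : point R d) : Prop :=
  forall i, X i (th i).

Definition bar (R : realType) n (d : 'I_n -> nat) (i : 'I_n) (th : point R d)
  : point R d := fun j => if j == i then 0 else th j.

Definition inXbar (R : realType) n (d : 'I_n -> nat)
  (X : forall i : 'I_n, 'rV[R]_(d i) -> Prop) (i : 'I_n) (th : point R d) : Prop :=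
  th i = 0 /\ forall j, j != i -> X j (th j).

(* convexity of g on the set A (inequality required whenever the
   convex combination stays in A; standard convexity when A is convex) *)
Definition convex_on (R : realType) (k : nat) (A : 'rV[R]_k -> Prop)
  (g : 'rV[R]_k -> R) : Prop :=
  forall x y (t : R), A x -> A y -> 0 <= t -> t <= 1 ->
    A ((1 - t) *: x + t *: y) ->
    g ((1 - t) *: x + t *: y) <= (1 - t) * g x + t * g y.

Definition BDC (R : realType) n (d : 'I_n -> nat)
  (X : forall i : 'I_n, 'rV[R]_(d i) -> Prop) (f : point R d -> R) : Prop :=
  forall i : 'I_n, exists g h : 'rV[R]_(d i) -> point R d -> R,
    (forall th, inX X th -> f th = g (th i) (bar i th) - h (th i) (bar i th)) /\
    (forall thb, inXbar X i thb ->
       convex_on (X i) (fun x => g x thb) /\ convex_on (X i) (fun x => h x thb)).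

Definition fmax (R : realType) n (d : 'I_n -> nat) m (hm : (0 < m)%N)
  (f : 'I_m -> point R d -> R) : point R d -> R :=
  fun th => \big[Num.max/f (Ordinal hm) th]_(r < m) f r th.
Definition fmin (R : realType) n (d : 'I_n -> nat) m (hm : (0 < m)%N)
  (f : 'I_m -> point R d -> R) : point R d -> R :=
  fun th => \big[Num.min/f (Ordinal hm) th]_(r < m) f r th.

(* Main.v *)
Require Import Defs.
From mathcomp Require Import all_boot all_order all_algebra.
From mathcomp Require Import reals.
From mathcomp Require Import lra.
From Stdlib Require Import FunctionalExtensionality.
Import Order.TTheory GRing.Theory Num.Theory.
Local Open Scope ring_scope.

Section Aux.
Variable R : realType.

Lemma maxE (a1 b1 a2 b2 : R) :
  Num.max (a1 - b1) (a2 - b2) = Num.max (a1 + b2) (a2 + b1) - (b1 + b2).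
Proof.
by case: leP => h; case: leP => k; lra.
Qed.

Lemma minE (a1 b1 a2 b2 : R) :
  Num.min (a1 - b1) (a2 - b2) = (a1 + a2) - Num.max (a1 + b2) (a2 + b1).
Proof.
by case: leP => h; case: leP => k; lra.
Qed.

Variable k : nat.
Variable A : 'rV[R]_k -> Prop.

Lemma cvx_const c : convex_on A (fun _ => c).
Proof. move=> x y t _ _ _ _ _; lra. Qed.

Lemma cvx_add g1 g2 : convex_on A g1 -> convex_on A g2 ->
  convex_on A (fun x => g1 x + g2 x).
Proof.
move=> c1 c2 x y t ax ay t0 t1 az.
have := c1 x y t ax ay t0 t1 az; have := c2 x y t ax ay t0 t1 az; lra.
Qed.

Lemma cvx_scale a g : 0 <= a -> convex_on A g -> convex_on A (fun x => a * g x).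
Proof.
move=> a0 c x y t ax ay t0 t1 az.
have := c x y t ax ay t0 t1 az => h.
have := ler_wpM2l a0 h; lra.
Qed.

Lemma cvx_max g1 g2 : convex_on A g1 -> convex_on A g2 ->
  convex_on A (fun x => Num.max (g1 x) (g2 x)).
Proof.
move=> c1 c2 x y t ax ay t0 t1 az.
have h1 := c1 x y t ax ay t0 t1 az; have h2 := c2 x y t ax ay t0 t1 az.
have m1x : g1 x <= Num.max (g1 x) (g2 x) by rewrite le_max lexx.
have m2x : g2 x <= Num.max (g1 x) (g2 x) by rewrite le_max lexx orbT.
have m1y : g1 y <= Num.max (g1 y) (g2 y) by rewrite le_max lexx.
have m2y : g2 y <= Num.max (g1 y) (g2 y) by rewrite le_max lexx orbT.
have s0 : 0 <= 1 - t by lra.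
have := ler_wpM2l s0 m1x; have := ler_wpM2l s0 m2x.
have := ler_wpM2l t0 m1y; have := ler_wpM2l t0 m2y.
rewrite ge_max; move=> *; apply/andP; split; lra.
Qed.

End Aux.

Section BDCl.
Variables (R : realType) (n : nat) (d : 'I_n -> nat)
  (X : forall i : 'I_n, 'rV[R]_(d i) -> Prop).

Lemma BDC_const c : BDC X (fun _ => c).
Proof.
move=> i; exists (fun _ _ => c), (fun _ _ => 0); split.
  by move=> *; rewrite subr0.
by move=> *; split; apply: cvx_const.
Qed.

Lemma BDC_add f1 f2 : BDC X f1 -> BDC X f2 -> BDC X (fun th => f1 th + f2 th).
Proof.
move=> H1 H2 i; have [g1 [h1 [E1 C1]]] := H1 i; have [g2 [h2 [E2 C2]]] := H2 i.
exists (fun x t => g1 x t + g2 x t), (fun x t => h1 x t + h2 x t); split.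
  by move=> th hth; rewrite E1 // E2 //; lra.
move=> thb hb; have [c1 c1'] := C1 _ hb; have [c2 c2'] := C2 _ hb.
by split; apply: cvx_add.
Qed.

Lemma BDC_scale a f : BDC X f -> BDC X (fun th => a * f th).
Proof.
move=> H i; have [g [h [E C]]] := H i.
case: (lerP 0 a) => a0.
  exists (fun x t => a * g x t), (fun x t => a * h x t); split.
    by move=> th hth; rewrite E //; lra.
  by move=> thb hb; have [c c'] := C _ hb; split; apply: cvx_scale.
exists (fun x t => (- a) * h x t), (fun x t => (- a) * g x t); split.
  by move=> th hth; rewrite E //; lra.
have a0' : 0 <= - a by lra.
by move=> thb hb; have [c c'] := C _ hb; split; apply: cvx_scale.
Qed.

Lemma BDC_max f1 f2 : BDC X f1 -> BDC X f2 ->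
  BDC X (fun th => Num.max (f1 th) (f2 th)).
Proof.
move=> H1 H2 i; have [g1 [h1 [E1 C1]]] := H1 i; have [g2 [h2 [E2 C2]]] := H2 i.
exists (fun x t => Num.max (g1 x t + h2 x t) (g2 x t + h1 x t)),
  (fun x t => h1 x t + h2 x t); split.
  by move=> th hth; rewrite E1 // E2 // maxE.
move=> thb hb; have [c1 c1'] := C1 _ hb; have [c2 c2'] := C2 _ hb.
by split; [apply: cvx_max; apply: cvx_add | apply: cvx_add].
Qed.

Lemma BDC_min f1 f2 : BDC X f1 -> BDC X f2 ->
  BDC X (fun th => Num.min (f1 th) (f2 th)).
Proof.
move=> H1 H2 i; have [g1 [h1 [E1 C1]]] := H1 i; have [g2 [h2 [E2 C2]]] := H2 i.
exists (fun x t => g1 x t + g2 x t),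
  (fun x t => Num.max (g1 x t + h2 x t) (g2 x t + h1 x t)); split.
  by move=> th hth; rewrite E1 // E2 // minE.
move=> thb hb; have [c1 c1'] := C1 _ hb; have [c2 c2'] := C2 _ hb.
by split; [apply: cvx_add | apply: cvx_max; apply: cvx_add].
Qed.

End BDCl.

Theorem proposition3p1 (R : realType) (n : nat) (d : 'I_n -> nat)
  (X : forall i : 'I_n, 'rV[R]_(d i) -> Prop)
  (m : nat) (hm : (0 < m)%N) (f : 'I_m -> point R d -> R) :
  (forall r, BDC X (f r)) ->
  (forall alpha : 'I_m -> R, BDC X (fun th => \sum_(r < m) alpha r * f r th)) /\
  BDC X (fmax hm f) /\
  BDC X (fmin hm f).
Proof.
move=> Hf; split; [|split].
- move=> alpha.
  have gen : forall s : seq 'I_m,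
      BDC X (fun th => \sum_(r <- s) alpha r * f r th).
    elim=> [|r s IH].
      have e : (fun th : point R d => \sum_(r <- [::]) alpha r * f r th)
               = (fun _ => 0) by apply: functional_extensionality => th; rewrite big_nil.
      by rewrite e; apply: BDC_const.
    have e : (fun th : point R d => \sum_(r0 <- r :: s) alpha r0 * f r0 th)
      = (fun th => alpha r * f r th + \sum_(r0 <- s) alpha r0 * f r0 th).
      by apply: functional_extensionality => th; rewrite big_cons.
    by rewrite e; apply: BDC_add => //; apply: BDC_scale.
  exact: gen.
- have gen : forall s : seq 'I_m,
      BDC X (fun th => \big[Num.max/f (Ordinal hm) th]_(r <- s) f r th).
    elim=> [|r s IH].
      have e : (fun th : point R d => \big[Num.max/f (Ordinal hm) th]_(r <- [::]) f r th)
               = f (Ordinal hm) by apply: functional_extensionality => th; rewrite big_nil.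
      by rewrite e.
    have e : (fun th : point R d => \big[Num.max/f (Ordinal hm) th]_(r0 <- r :: s) f r0 th)
      = (fun th => Num.max (f r th) (\big[Num.max/f (Ordinal hm) th]_(r0 <- s) f r0 th)).
      by apply: functional_extensionality => th; rewrite big_cons.
    by rewrite e; apply: BDC_max.
  exact: gen.
- have gen : forall s : seq 'I_m,
      BDC X (fun th => \big[Num.min/f (Ordinal hm) th]_(r <- s) f r th).
    elim=> [|r s IH].
      have e : (fun th : point R d => \big[Num.min/f (Ordinal hm) th]_(r <- [::]) f r th)
               = f (Ordinal hm) by apply: functional_extensionality => th; rewrite big_nil.
      by rewrite e.
    have e : (fun th : point R d => \big[Num.min/f (Ordinal hm) th]_(r0 <- r :: s) f r0 th)
      = (fun th => Num.min (f r th) (\big[Num.min/f (Ordinal hm) th]_(r0 <- s) f r0 th)).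
      by apply: functional_extensionality => th; rewrite big_cons.
    by rewrite e; apply: BDC_min.
  exact: gen.
Qed.
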